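(* Let $f$ be a scaling function and let $(\sigma_j)_{j\in\mathbb{N}}$ be a sequence of permutations with $|\sigma_j|\to\infty$ that converges at scale $f$ to the increasing limit, i.e. $\rho_{f}(\pi,\sigma_j)\to1$ if $\pi$ is an increasing permutation $12\dots k$ and $\rho_f(\pi,\sigma_j)\to0$ for every other permutation $\pi$. Then for every constant $c\in(0,1)$, the sequence $(\sigma_j)$ also converges at scale $cf$ to the increasing limit.
   Context: A scaling function is a function $f:\mathbb{N}\to\mathbb{R}^+$ with $f(n)\le n$ for all $n$, $f(n)\to\infty$ and $f(n)/n\to 0$. An occurrence of a pattern $\pi\in S_k$ in $\sigma\in S_n$ is a $k$-element set of indices $i_1<\dots<i_k$ such that $\sigma(i_1)\dots\sigma(i_k)$ is order-isomorphic to $\pi$; its width is $i_k-i_1+1$. For real $f\in[k,n]$, $\rho_f(\pi,\sigma)$ is the number of occurrences of $\pi$ in $\sigma$ of width at most $f$ divided by the number of $k$-element subsets of $[n]$ of width at most $f$, and $\rho_f(\pi,\sigma_j)$ means $\rho_{f(|\sigma_j|)}(\pi,\sigma_j)$. Convergence at scale $g$ to $\Xi$ means $\rho_{g(|\sigma_j|)}(\pi,\sigma_j)\to\Xi_\pi$ for every permutation $\pi$. *)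

(* Defs.v *)
From HB Require Import structures.
From mathcomp Require Import all_boot all_order all_algebra all_fingroup.
From mathcomp Require Import all_classical all_reals all_analysis.
Set Implicit Arguments. Unset Strict Implicit. Unset Printing Implicit Defensive.
Import Order.TTheory GRing.Theory Num.Theory.
Import numFieldNormedType.Exports.
Local Open Scope classical_set_scope.
Local Open Scope ring_scope.

(* An occurrence of a pattern of length k in sigma in S_n is a k-element set of
   indices i_1 < ... < i_k; we encode it by the strictly increasing map
   g : 'I_k -> 'I_n, a |-> i_(a+1) (bijective with k-element subsets). *)
Definition incr_map (k n : nat) (g : {ffun 'I_k -> 'I_n}) : bool :=
  [forall a : 'I_k, forall b : 'I_k, (a < b)%N ==> (g a < g b)%N].

Definition width (k n : nat) (g : {ffun 'I_k.+1 -> 'I_n}) : nat :=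
  ((g ord_max) - (g ord0)).+1.

Definition order_iso (k n : nat) (pi : 'S_k) (sigma : 'S_n)
  (g : {ffun 'I_k -> 'I_n}) : bool :=
  [forall a : 'I_k, forall b : 'I_k,
     ((sigma (g a) < sigma (g b))%N == (pi a < pi b)%N)].

Definition rho (R : realType) (k n : nat) (pi : 'S_k.+1) (sigma : 'S_n) (x : R) : R :=
  (#|[set g : {ffun 'I_k.+1 -> 'I_n} |
       [&& incr_map g, order_iso pi sigma g & ((width g)%:R <= x)]]|)%:R /
  (#|[set g : {ffun 'I_k.+1 -> 'I_n} | incr_map g && ((width g)%:R <= x)]|)%:R.

Definition scaling_function (R : realType) (f : nat -> R) : Prop :=
  [/\ (forall n : nat, (0 < n)%N -> 0 < f n),
      (forall n : nat, (0 < n)%N -> f n <= n%:R),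
      f @ \oo --> +oo &
      (fun n : nat => f n / n%:R) @ \oo --> 0].

Definition incr_limit (R : realType) (k : nat) (pi : 'S_k.+1) : R :=
  if pi == 1%g then 1 else 0.

Definition converges_at_scale (R : realType) (g : nat -> R) (sz : nat -> nat)
  (sigma : forall j : nat, 'S_(sz j)) (Xi : forall k : nat, 'S_k.+1 -> R) : Prop :=
  forall (k : nat) (pi : 'S_k.+1),
    (fun j : nat => rho pi (sigma j) (g (sz j))) @ \oo --> Xi k pi.

(* Main.v *)
Require Import Defs.
From HB Require Import structures.
From mathcomp Require Import all_boot all_order all_algebra all_fingroup.
From mathcomp Require Import all_classical all_reals all_analysis.
From mathcomp Require Import zify ring lra.
Import Order.TTheory GRing.Theory Num.Theory.
Import numFieldNormedType.Exports.

Definition Tn n k W := #|[set g : {ffun 'I_k.+1 -> 'I_n} | incr_map g && (width g <= W)%N]|.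

Lemma incr_le k n (g : {ffun 'I_k -> 'I_n}) (a b : 'I_k) :
  incr_map g -> (a <= b)%N -> (g a <= g b)%N.
Proof.
move=> /forallP H ab; case: (ltngtP a b) => [lt|lt|E].
- by have /forallP/(_ b)/implyP/(_ lt)/ltnW := H a.
- by move: ab; rewrite leqNgt lt.
- by rewrite (val_inj E).
Qed.

Arguments incr_le {k n g a b}.

Lemma Tn_upper n k W : (Tn n k W <= n * W ^ k)%N.
Proof.
case: W => [|W].
  suff -> : Tn n k 0 = 0%N by [].
  apply/eqP; rewrite /Tn cards_eq0; apply/eqP/setP => g; rewrite !inE /width.
  by rewrite ltn0 andbF.
pose phi (g : {ffun 'I_k.+1 -> 'I_n}) :=
  (g ord0, [ffun a : 'I_k => (inord (g (lift ord0 a) - g ord0) : 'I_W.+1)]).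
have bnd : forall g, g \in [set g : {ffun 'I_k.+1 -> 'I_n} | incr_map g && (width g <= W.+1)%N] ->
  forall b : 'I_k, (g (lift ord0 b) - g ord0 < W.+1)%N.
  move=> g; rewrite inE /width => /andP[ig wg] b.
  have h := incr_le ig (leq_ord (lift ord0 b) : (_ <= @ord_max k)%N).
  by apply: leq_ltn_trans wg; apply: leq_sub2r.
rewrite /Tn -(card_in_imset (f:=phi)).
  by apply: leq_trans (max_card _) _; rewrite card_prod card_ffun !card_ord.
move=> g1 g2 G1 G2 [e0 e]; apply/ffunP => a.
case: (unliftP ord0 a) => [b ->|->]; last by rewrite e0.
have := congr1 (fun h : {ffun 'I_k -> 'I_W.+1} => nat_of_ord (h b)) e; rewrite !ffunE /= !inordK; 
  try by apply: bnd.
move: G1 G2; rewrite !inE => /andP[i1 _] /andP[i2 _].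
have h1 := incr_le i1 (leq0n (lift ord0 b) : (@ord0 k <= _)%N).
have h2 := incr_le i2 (leq0n (lift ord0 b) : (@ord0 k <= _)%N).
have e0' : nat_of_ord (g1 ord0) = g2 ord0 by rewrite e0.
move=> E; apply: ord_inj; by rewrite -(subnK h1) -(subnK h2) E e0'.
Qed.

Lemma divmod_uniq m q1 r1 q2 r2 : (r1 < m)%N -> (r2 < m)%N ->
  m * q1 + r1 = m * q2 + r2 -> q1 = q2 /\ r1 = r2.
Proof.
move=> h1 h2 E; have m0 : 0 < m by apply: leq_ltn_trans h1.
have := congr1 (divn^~ m) E; rewrite /= !(mulnC m) !divnMDl // !divn_small // !addn0 => q.
by split=> //; move: E; rewrite q => /addnI.
Qed.

Arguments divmod_uniq {m q1 r1 q2 r2}.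

Lemma Tn_lower n k W m : (0 < m)%N -> (k.+1 * m <= W)%N ->
  ((n %/ m - k) * m ^ k.+1 <= Tn n k W)%N.
Proof.
move=> m0 mW; case: n => [|n]; first by rewrite div0n.
set S := (n.+1 %/ m - k)%N.
pose psi (p : 'I_S * {ffun 'I_k.+1 -> 'I_m}) : {ffun 'I_k.+1 -> 'I_n.+1} :=
  [ffun a : 'I_k.+1 => inord (m * (p.1 + a) + p.2 a)].
have bound : forall (p : 'I_S * {ffun 'I_k.+1 -> 'I_m}) (a : 'I_k.+1),
    (m * (p.1 + a) + p.2 a < n.+1)%N.
  move=> [s h] a /=.
  have hs := ltn_ord s; have ha := ltn_ord a; have hh := ltn_ord (h a).
  have hq := leq_trunc_div n.+1 m.
  have le1 : ((s + a).+1 <= n.+1 %/ m)%N.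
    by move: hs ha; rewrite /S; move: (n.+1 %/ m) (nat_of_ord s) (nat_of_ord a) => q x y; lia.
  have := leq_mul2l m (s + a).+1 (n.+1 %/ m); rewrite le1 orbT => /idP le2.
  rewrite mulnS in le2; rewrite mulnC in hq.
  move: le2 hq hh; move: (m * (s + a)) (m * (n.+1 %/ m)) (nat_of_ord (h a)) => x y z; lia.
have injpsi : injective psi.
  move=> [s1 h1] [s2 h2] /ffunP E.
  have Ea (a : 'I_k.+1) : m * (s1 + a) + h1 a = m * (s2 + a) + h2 a.
    have b1 := bound (s1, h1) a; have b2 := bound (s2, h2) a; simpl in b1, b2.
    by have := congr1 val (E a); rewrite !ffunE /= !inordK.
  have [es _] := divmod_uniq (ltn_ord _) (ltn_ord _) (Ea ord0).
  have es' : s1 = s2 by apply: val_inj; move: es => /=; lia.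
  rewrite es'; congr pair; apply/ffunP => a; apply: ord_inj.
  by have [_ E'] := divmod_uniq (ltn_ord _) (ltn_ord _) (Ea a).
have -> : ((S * m ^ k.+1) = #|psi @: [set: 'I_S * {ffun 'I_k.+1 -> 'I_m}]|)%N.
  by rewrite card_imset // cardsT card_prod card_ffun !card_ord.
apply: subset_leq_card; apply/fintype.subsetP => _ /imsetP[[s h] _ ->].
rewrite inE; apply/andP; split.
  apply/forallP => a; apply/forallP => b; apply/implyP => ab.
  rewrite !ffunE !inordK /=; try by apply: (bound (s, h)).
  have ha := ltn_ord (h a).
  have : (m * (s + a).+1 <= m * (s + b))%N by rewrite leq_mul2l; lia.
  rewrite mulnS; move: ha; move: (m * (s + a)) (m * (s + b)) (nat_of_ord (h a)) (nat_of_ord (h b)) => x y z w; lia.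
rewrite /width !ffunE !inordK /=; try by apply: (bound (s, h)).
have hm := ltn_ord (h ord_max).
rewrite addn0 mulnDr; move: hm mW; rewrite mulSn (mulnC k).
move: (m * s) (m * k) (nat_of_ord (h ord_max)) (nat_of_ord (h ord0)) => x y z w; lia.
Qed.

Lemma cardE (T : finType) (P : pred T) :
  #|([set x | P x])%classic| = #|[set x | P x]|.
Proof. by apply: eq_card => x; rewrite inE; apply/idP/idP; rewrite in_setE. Qed.

Local Open Scope ring_scope.

Lemma ratio_le (R : realFieldType) (x1 x2 t1 t2 B : R) :
  0 <= x1 <= x2 -> 0 < t1 -> 0 < t2 -> t2 <= B * t1 -> x1 / t1 <= B * (x2 / t2).
Proof.
move=> /andP[x10 x12] t1p t2p tB.
have q1 : 1 <= B * t1 / t2 by rewrite ler_pdivlMr // mul1r.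
have -> : B * (x2 / t2) = x2 * (B * t1 / t2) / t1.
  by field; rewrite ?gt_eqF.
rewrite ler_pM2r ?invr_gt0 //; nra.
Qed.

Lemma lowN_aux n k m : (0 < m)%N -> (n - k.+1 * m <= (n %/ m - k) * m)%N.
Proof.
move=> m0; have := ltn_mod n m; rewrite m0 => /idP hmod.
have := divn_eq n m; move: hmod; rewrite mulnBl mulSn.
move: (n %/ m * m)%N (n %% m)%N (k * m)%N => x y z; lia.
Qed.

Lemma Tbound (R : realType) k n (F c : R) : 0 < c < 1 -> (0 < n)%N -> F <= n%:R ->
  2 * (k.+1)%:R <= c * F ->
  (0 < Tn n k (Num.truncn (c * F)))%N /\
  (Tn n k (Num.truncn F))%:R <= ((2 * (k.+1)%:R / c) ^+ k / (1 - c)) * (Tn n k (Num.truncn (c * F)))%:R.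
Proof.
move=> /andP[c0 c1] n0 Fn cF.
have kp : 0 < (k.+1)%:R :> R by rewrite ltr0n.
have F0 : 0 < F.
  have : 0 < c * F by apply: lt_le_trans cF; rewrite mulr_gt0.
  by rewrite pmulr_rgt0.
set W1 := Num.truncn F; set W2 := Num.truncn (c * F).
set m := (W2 %/ k.+1)%N.
have f1 : W1%:R <= F by rewrite truncn_le ltW.
have f2 : c * F < (W2.+1)%:R by apply: truncnS_gt.
have f3 : (W2.+1 <= m.+1 * k.+1)%N by apply: ltn_ceil.
have f3' : c * F < (m%:R + 1) * (k.+1)%:R.
  apply: lt_le_trans f2 _; rewrite natr1 -natrM ler_nat; lia.
have km : c * F / 2 < (k.+1)%:R * m%:R by nra.
have m0 : (0 < m)%N.
  rewrite lt0n; apply/negP => /eqP m0; move: km; rewrite m0 mulr0; nra.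
have mR : 0 < m%:R :> R by rewrite ltr0n.
have FD : F <= 2 * (k.+1)%:R / c * m%:R.
  rewrite mulrAC ler_pdivlMr //; nra.
have f4 : (k.+1 * m <= W2)%N by rewrite mulnC leq_trunc_div.
have W2n : (W2 <= n)%N.
  rewrite /W2 -(@natrK R n); apply: le_truncn; nra.
have W2R : W2%:R <= c * F by rewrite truncn_le; nra.
have kmn : (k.+1 * m <= n)%N by apply: leq_trans W2n.
have kmR : (k.+1 * m)%:R <= c * n%:R :> R.
  apply: le_trans (le_trans W2R _); first by rewrite ler_nat.
  by rewrite ler_pM2l.
have lowN := @lowN_aux n k m m0.
have low := @Tn_lower n k W2 m m0 f4.
have lowR : (1 - c) * n%:R * m%:R ^+ k <= (Tn n k W2)%:R.
  apply: le_trans (_ : ((n %/ m - k) * m ^ k.+1)%N%:R <= _); last by rewrite ler_nat.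
  rewrite expnS mulnA natrM natrX.
  have : (n - k.+1 * m)%N%:R <= ((n %/ m - k) * m)%N%:R :> R by rewrite ler_nat.
  rewrite natrB // => h.
  have mk0 : 0 <= m%:R ^+ k :> R by rewrite exprn_ge0 // ltW.
  apply: ler_wpM2r => //. nra.
have upR : (Tn n k W1)%:R <= n%:R * F ^+ k :> R.
  apply: le_trans (_ : (n * W1 ^ k)%N%:R <= _); first by rewrite ler_nat Tn_upper.
  rewrite natrM natrX ler_wpM2l // lerXn2r // ?nnegrE //; lra.
have pos : 0 < (1 - c) * n%:R * m%:R ^+ k.
  by rewrite !mulr_gt0 ?subr_gt0 ?ltr0n ?exprn_gt0.
split.
  by rewrite -(ltr0n R); apply: lt_le_trans lowR.
apply: le_trans upR _.
have D0 : 0 <= 2 * (k.+1)%:R / c by rewrite divr_ge0 ?mulr_ge0 // ltW.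
have : F ^+ k <= (2 * (k.+1)%:R / c) ^+ k * m%:R ^+ k.
  rewrite -exprMn lerXn2r // ?nnegrE //; [lra | by rewrite mulr_ge0 // ltW].
move=> hF.
have c1' : 0 < 1 - c by rewrite subr_gt0.
apply: le_trans (_ : n%:R * ((2 * (k.+1)%:R / c) ^+ k * m%:R ^+ k) <= _).
  by rewrite ler_wpM2l.
apply: le_trans (_ : (2 * (k.+1)%:R / c) ^+ k / (1 - c) * ((1 - c) * n%:R * m%:R ^+ k) <= _); last first.
  rewrite ler_wpM2l //; by rewrite divr_ge0 ?exprn_ge0 // ltW.
set D := (2 * (k.+1)%:R / c) ^+ k.
have -> : D / (1 - c) * ((1 - c) * n%:R * m%:R ^+ k) = n%:R * (D * m%:R ^+ k).
  by field; rewrite gt_eqF.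
by [].
Qed.


Definition CA k n (pi : 'S_k.+1) (sigma : 'S_n) W :=
  #|[set g : {ffun 'I_k.+1 -> 'I_n} | [&& incr_map g, order_iso pi sigma g & (width g <= W)%N]]|.
Definition CN k n (pi : 'S_k.+1) (sigma : 'S_n) W :=
  #|[set g : {ffun 'I_k.+1 -> 'I_n} | [&& incr_map g, ~~ order_iso pi sigma g & (width g <= W)%N]]|.

Lemma memE (T : finType) (P : pred T) x :
  (x \in ([set y | P y])%classic) = P x.
Proof. by apply/idP/idP; rewrite in_setE. Qed.

Arguments CA {k n}. Arguments CN {k n}.

Lemma rhoE (R : realType) k n (pi : 'S_k.+1) (sigma : 'S_n) (x : R) : 0 <= x ->
  rho pi sigma x = (CA pi sigma (Num.truncn x))%:R / (Tn n k (Num.truncn x))%:R.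
Proof.
move=> x0; rewrite /rho /Tn /CA; congr (_%:R / _%:R); apply: eq_card => g;
  by rewrite [RHS]inE (truncn_ge_nat _ x0) memE.
Qed.

Lemma split_T k n (pi : 'S_k.+1) (sigma : 'S_n) W :
  Tn n k W = (CA pi sigma W + CN pi sigma W)%N.
Proof.
rewrite /Tn /CA /CN -(cardsID [set g | order_iso pi sigma g]); congr (_ + _)%N;
  apply: eq_card => g; rewrite !inE;
  by case: (incr_map g) (order_iso pi sigma g) (width g <= W)%N => [] [] [].
Qed.

Lemma CA_mono k n (pi : 'S_k.+1) (sigma : 'S_n) W W' : (W <= W')%N ->
  (CA pi sigma W <= CA pi sigma W')%N.
Proof.
move=> WW; apply: subset_leq_card; apply/fintype.subsetP => g; rewrite !inE.
by case/and3P=> -> -> h /=; apply: leq_trans h WW.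
Qed.

Lemma CN_mono k n (pi : 'S_k.+1) (sigma : 'S_n) W W' : (W <= W')%N ->
  (CN pi sigma W <= CN pi sigma W')%N.
Proof.
move=> WW; apply: subset_leq_card; apply/fintype.subsetP => g; rewrite !inE.
by case/and3P=> -> -> h /=; apply: leq_trans h WW.
Qed.

Arguments CA_mono {k n} pi sigma {W W'}.
Arguments CN_mono {k n} pi sigma {W W'}.
Arguments split_T {k n} pi sigma W.

Lemma key (R : realType) k n (pi : 'S_k.+1) (sigma : 'S_n) (F c : R) :
  0 < c < 1 -> (0 < n)%N -> F <= n%:R -> 2 * (k.+1)%:R <= c * F ->
  [/\ 0 <= rho pi sigma (c * F) <= 1,
      rho pi sigma (c * F) <= ((2 * (k.+1)%:R / c) ^+ k / (1 - c)) * rho pi sigma F &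
      1 - ((2 * (k.+1)%:R / c) ^+ k / (1 - c)) * (1 - rho pi sigma F) <= rho pi sigma (c * F)].
Proof.
move=> hc n0 Fn cF.
have [T2p TB] := @Tbound R k n F c hc n0 Fn cF.
set B := (2 * (k.+1)%:R / c) ^+ k / (1 - c) in TB *.
have /andP[c0 c1] := hc.
have F0 : 0 < F.
  have : 0 < c * F by apply: lt_le_trans cF; rewrite mulr_gt0 // ltr0n.
  by rewrite pmulr_rgt0.
have W21 : (Num.truncn (c * F) <= Num.truncn F)%N.
  by apply: le_truncn; rewrite ler_piMl // ltW.
have F0' : 0 <= F by apply: ltW.
have cF0 : 0 <= c * F by rewrite mulr_ge0 // ltW.
rewrite !rhoE //.
rewrite !(split_T pi sigma) in T2p TB *.
have hA := CA_mono pi sigma W21; have hN := CN_mono pi sigma W21.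
move: T2p TB hA hN.
move: (CA pi sigma (Num.truncn (c * F))) (CN pi sigma (Num.truncn (c * F)))
      (CA pi sigma (Num.truncn F)) (CN pi sigma (Num.truncn F)) => a1 n1 a2 n2.
move=> t1p TB hA hN.
have t1R : 0 < (a1 + n1)%N%:R :> R by rewrite ltr0n.
have t2R : 0 < (a2 + n2)%N%:R :> R by rewrite ltr0n; apply: leq_trans t1p _; apply: leq_add.
have e (a n' : nat) : 0 < (a + n')%N%:R :> R ->
    1 - a%:R / (a + n')%N%:R = n'%:R / (a + n')%N%:R :> R.
  move=> tp; rewrite natrD in tp *; field; by rewrite gt_eqF.
split.
- rewrite divr_ge0 //= ler_pdivrMr // mul1r ler_nat; exact: leq_addr.
- by apply: ratio_le => //; rewrite ler0n /= ler_nat.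
- rewrite (e _ _ t2R).
  have h : n1%:R / (a1 + n1)%N%:R <= B * (n2%:R / (a2 + n2)%N%:R) :> R.
    by apply: ratio_le => //; rewrite ler0n /= ler_nat.
  have := e _ _ t1R; move: h.
  move: (n1%:R / (a1 + n1)%N%:R) (B * (n2%:R / (a2 + n2)%N%:R)) (a1%:R / (a1 + n1)%N%:R) => x y z.
  move=> *; lra.
Qed.


Local Open Scope classical_set_scope.
Local Open Scope ring_scope.

Theorem mainTheorem8 (R : realType) (f : nat -> R) (sz : nat -> nat)
  (sigma : forall j : nat, 'S_(sz j)) :
  scaling_function f ->
  (forall M : nat, exists J : nat, forall j : nat, (J <= j)%N -> (M <= sz j)%N) ->
  converges_at_scale f sigma (@incr_limit R) ->
  forall c : R, 0 < c < 1 ->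
    converges_at_scale (fun n : nat => c * f n) sigma (@incr_limit R).
Proof.
move=> [fpos fle finf _] hsz hconv c hc k pi.
set B := (2 * (k.+1)%:R / c) ^+ k / (1 - c).
have /andP[c0 c1] := hc.
have ev : \forall j \near \oo,
  [/\ 0 <= rho pi (sigma j) (c * f (sz j)) <= 1,
      rho pi (sigma j) (c * f (sz j)) <= B * rho pi (sigma j) (f (sz j)) &
      1 - B * (1 - rho pi (sigma j) (f (sz j))) <= rho pi (sigma j) (c * f (sz j))].
  have := (cvgryPge f).1 finf (2 * (k.+1)%:R / c).
  case=> N _ HN.
  have [J HJ] := hsz (maxn N 1).
  exists J => // j /= Jj.
  have := HJ j Jj; rewrite geq_max => /andP[Nj n0].
  have hA : 2 * (k.+1)%:R / c <= f (sz j) by apply: HN.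
  apply: key => //; first by apply: fle.
  by move: hA; rewrite ler_pdivrMr // [f _ * c]mulrC.
have hk := hconv k pi.
move: hk; rewrite /incr_limit; case: eqP => _ hk.
- apply: (squeeze_cvgr (f := fun j => 1 - B * (1 - rho pi (sigma j) (f (sz j)))) (h := fun=> 1)).
  + by apply: filterS ev => j [/andP[_ h1] _ h2]; rewrite h2 h1.
  + have H : (fun j => 1 - B * (1 - rho pi (sigma j) (f (sz j)))) @ \oo --> 1 - B * (1 - 1)
      := cvgB (cvg_cst (1 : R)) (cvgM (cvg_cst B) (cvgB (cvg_cst (1 : R)) hk)).
    rewrite subrr mulr0 subr0 in H; exact: H.
  + exact: cvg_cst.
- apply: (squeeze_cvgr (f := fun=> 0) (h := fun j => B * rho pi (sigma j) (f (sz j)))).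
  + by apply: filterS ev => j [/andP[h0 _] h1 _]; rewrite h0 h1.
  + exact: cvg_cst.
  + have H : (fun j => B * rho pi (sigma j) (f (sz j))) @ \oo --> B * 0
      := cvgM (cvg_cst B) hk.
    rewrite mulr0 in H; exact: H.
Qed.
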